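(* For every $n\ge 1$: (a) the number of Dyck paths $D$ of semilength $n$ such that $\mathcal N\cap\mathcal D\subseteq\mathcal F$ equals the number of Motzkin paths of length $n$; (b) the number of Dyck paths $D$ of semilength $n$ such that $\mathcal N\cap\mathcal D=\emptyset$ equals the number of Riordan paths of length $n$.
   Context: Work in an $n\times n$ array of unit cells; the cell $(i,j)$ is the one in column $i$ (columns numbered $1,\dots,n$ from left to right) and row $j$ (rows numbered $1,\dots,n$ from bottom to top). A Dyck path of semilength $n$ is a lattice path from $(0,0)$ to $(n,n)$ with unit north and east steps that never goes below the line $y=x$. Row-area sequence: $r_0=-1$ and, for $1\le k\le n$, $r_k=k-1-x_k$ where $x_k$ is the $x$-coordinate of the $k$-th north step (the number of full cells in row $k$ strictly between the path and the diagonal). Column-area sequence: for $1\le k\le n$, $c_k=y_k-k$ where $y_k$ is the height of the $k$-th east step (the number of full cells in column $k$ strictly between the path and the diagonal), and $c_{n+1}=-1$. A valley of $D$ is an east step immediately followed by a north step; if the east step is the $k$-th east step and the north step is the $\ell$-th north step, the valley is at position $(k,\ell)$ (column $k$, row $\ell$). Define: $\mathcal D=\{k\in\{1,\dots,n\}: c_{k+1}=c_k-1\}$; $\mathcal F=\{k\in\{1,\dots,n\}: r_{k+1+c_{k+1}}=r_{k-1}+c_{k+1}+2\}$; $\mathcal N$ = the set of $k\in\{1,\dots,n\}$ such that row $k$ contains no valley of $D$. A Motzkin path of length $n$ is a lattice path from $(0,0)$ to $(n,0)$ with steps $(1,1)$, $(1,-1)$, $(1,0)$ never going below the $x$-axis;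 a Riordan path is a Motzkin path with no level step $(1,0)$ at height zero. *)

(* Defs.v *)
From mathcomp Require Import all_boot all_order all_algebra.
Set Implicit Arguments. Unset Strict Implicit. Unset Printing Implicit Defensive.
Import GRing.Theory Num.Theory.
Local Open Scope ring_scope.

(* A lattice path is a seq bool: true = north step, false = east step. *)

(* 0-based position in s of the k-th (1-based) occurrence of b. *)
Definition kth_pos (b : bool) (s : seq bool) (k : nat) : nat :=
  nth 0%N [seq i <- iota 0 (size s) | nth (~~ b) s i == b] k.-1.

Definition is_dyck (n : nat) (s : seq bool) : bool :=
  [&& size s == (2 * n)%N, count_mem true s == n &
      all (fun i => count_mem false (take i s) <= count_mem true (take i s))%N
          (iota 0 (size s).+1)].

Definition xcoord (s : seq bool) (k : nat) : nat :=
  count_mem false (take (kth_pos true s k) s).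
Definition ycoord (s : seq bool) (k : nat) : nat :=
  count_mem true (take (kth_pos false s k) s).

Definition rarea (s : seq bool) (k : nat) : int :=
  if k is k'.+1 then k'%:Z - (xcoord s k)%:Z else -1.

Definition carea (n : nat) (s : seq bool) (k : nat) : int :=
  if (1 <= k <= n)%N then (ycoord s k)%:Z - k%:Z else -1.

Definition inD (n : nat) (s : seq bool) (k : nat) : bool :=
  carea n s k.+1 == carea n s k - 1.

Definition inF (n : nat) (s : seq bool) (k : nat) : bool :=
  rarea s (absz ((k.+1)%:Z + carea n s k.+1)) == rarea s k.-1 + carea n s k.+1 + 2.

(* row k contains a valley iff the k-th north step is immediately preceded
   by an east step. *)
Definition row_has_valley (s : seq bool) (k : nat) : bool :=
  let p := kth_pos true s k in (0 < p)%N && (nth true s p.-1 == false).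

Definition inN (s : seq bool) (k : nat) : bool := ~~ row_has_valley s k.

(* Motzkin steps encoded in 'I_3: 0 = up (1,1), 1 = down (1,-1), 2 = level. *)
Definition mstep (x : 'I_3) : int :=
  if val x == 0%N then 1 else if val x == 1%N then -1 else 0.

Definition mheight (s : seq 'I_3) : int := foldr (fun x h => mstep x + h) 0 s.

Definition is_motzkin (s : seq 'I_3) : bool :=
  (mheight s == 0) &&
  all (fun i => 0 <= mheight (take i s)) (iota 0 (size s).+1).

Definition is_riordan (s : seq 'I_3) : bool :=
  is_motzkin s &&
  all (fun i => ~~ ((val (nth ord0 s i) == 2%N) && (mheight (take i s) == 0)))
      (iota 0 (size s)).

(* Main.v *)
Require Import Defs.
From mathcomp Require Import all_boot all_order all_algebra.
From mathcomp Require Import zify.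

Module Part1.
Set Implicit Arguments. Unset Strict Implicit. Unset Printing Implicit Defensive.

Definition pos (b : bool) (s : seq bool) : seq nat :=
  [seq i <- iota 0 (size s) | nth (~~ b) s i == b].

Lemma kth_posE b s k : kth_pos b s k = nth 0 (pos b s) k.-1.
Proof. by []. Qed.

Lemma pos_cons b a s :
  pos b (a :: s) = if a == b then 0 :: map succn (pos b s) else map succn (pos b s).
Proof.
rewrite /pos /=.
have -> : [seq i <- iota 1 (size s) | nth (~~ b) (a :: s) i == b]
        = map succn [seq i <- iota 0 (size s) | nth (~~ b) s i == b].
  by rewrite -(addn0 1) iotaDl filter_map; congr map; apply: eq_filter => i.
by case: (a == b).
Qed.

Lemma size_pos b s : size (pos b s) = count_mem b s.
Proof.
elim: s => [//|a s IH]; rewrite pos_cons /=.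
by case: (a == b) => /=; rewrite size_map IH // eq_sym; case: eqP.
Qed.


Lemma pos_nth b s j : j < size (pos b s) ->
  [/\ nth 0 (pos b s) j < size s, nth (~~ b) s (nth 0 (pos b s) j) = b &
      count_mem b (take (nth 0 (pos b s) j) s) = j].
Proof.
elim: s j => [//|a s IH] j; rewrite pos_cons.
case: eqP => [eab|nab].
  subst a.
  case: j => [|j] /=; first by move=> _; split.
  rewrite ltnS size_map => hj; have [h1 h2 h3] := IH _ hj.
  by rewrite (nth_map 0) //= h3 eqxx h2 ltnS h1.
rewrite size_map => hj; have [h1 h2 h3] := IH _ hj.
rewrite (nth_map 0) //= h2 ltnS h1 h3; split => //.
by case: eqP => // e; case: nab; rewrite e.
Qed.

Lemma sorted_pos b s : sorted ltn (pos b s).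
Proof. exact: sorted_filter ltn_trans _ _ (iota_ltn_sorted 0 _). Qed.

Lemma mem_pos b s i : (i \in pos b s) = (i < size s) && (nth (~~ b) s i == b).
Proof. by rewrite mem_filter mem_iota add0n andbC. Qed.

Lemma count_take_pos b s q :
  count_mem b (take q s) = count (fun p => p < q) (pos b s).
Proof.
elim: s q => [|a s IH] q; first by case: q.
case: q => [|q].
  rewrite take0 pos_cons; case: (a == b) => //=; rewrite count_map;
  by apply/esym/eqP; rewrite -leqn0 leqNgt -has_count; apply/hasP=> -[].
rewrite /= pos_cons IH; case: eqP => [<-|nab] /=; rewrite count_map //=.
Qed.

Lemma count_take_mono (T : Type) (a : pred T) s m m' : m <= m' ->
  count a (take m s) <= count a (take m' s).
Proof. by move/subnKC <-; rewrite takeD count_cat leq_addr. Qed.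

Lemma dyckP n s : is_dyck n s ->
  [/\ size s = 2 * n, count_mem true s = n, count_mem false s = n &
      forall i, i <= size s -> count_mem false (take i s) <= count_mem true (take i s)].
Proof.
case/and3P => /eqP hs /eqP ht /allP ha; split => //.
  have h := count_predC (pred1 true) s.
  have -> : count_mem false s = count (predC (pred1 true)) s by apply: eq_count => -[].
  rewrite hs in h; rewrite ht in h; lia.
by move=> i hi; apply: ha; rewrite mem_iota ltnS.
Qed.

Lemma count_tf (s : seq bool) : count_mem true s + count_mem false s = size s.
Proof. by elim: s => //= -[] s /= <-; rewrite ?addnS. Qed.

Lemma pk_spec n s k : is_dyck n s -> 0 < k <= n ->
  let p := kth_pos true s k in
  [/\ p < 2 * n, nth false s p = true, count_mem true (take p s) = k.-1 &
      p = k.-1 + xcoord s k].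
Proof.
move=> hd /andP [k0 kn] p; have [hs ht hf hpre] := dyckP hd.
have hk : k.-1 < size (pos true s) by rewrite size_pos ht; lia.
have [h1 h2 h3] := pos_nth hk.
rewrite /p kth_posE -hs h1 h2 h3; split => //.
have := count_tf (take (nth 0 (pos true s) k.-1) s).
rewrite /xcoord kth_posE size_take h1 h3; lia.
Qed.

Lemma x_lt n s k : is_dyck n s -> 0 < k <= n -> xcoord s k < k.
Proof.
move=> hd hk; have [hs ht hf hpre] := dyckP hd.
have [h1 h2 h3 h4] := pk_spec hd hk.
have := hpre (kth_pos true s k); rewrite -/(xcoord s k) h3 hs => /(_ (ltnW h1)).
lia.
Qed.

Lemma x_mono n s i j : is_dyck n s -> 0 < i -> i <= j -> j <= n ->
  xcoord s i <= xcoord s j.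
Proof.
move=> hd i0 ij jn.
have [hs ht hf hpre] := dyckP hd.
rewrite /xcoord !kth_posE; apply: count_take_mono.
case: (ltngtP i j) => [lij||->//]; last lia.
apply: ltnW; apply: (sorted_ltn_nth ltn_trans 0 (sorted_pos true s)); last lia;
  rewrite !inE size_pos ht; lia.
Qed.

Lemma qk_spec n s i : is_dyck n s -> 0 < i <= n ->
  let q := kth_pos false s i in
  [/\ q < 2 * n, nth true s q = false & count_mem false (take q s) = i.-1].
Proof.
move=> hd /andP [k0 kn] q; have [hs ht hf hpre] := dyckP hd.
have hk : i.-1 < size (pos false s) by rewrite size_pos hf; lia.
have [h1 h2 h3] := pos_nth hk.
by rewrite /q kth_posE -hs h1 h2 h3.
Qed.

Lemma galois n s i j : is_dyck n s -> 0 < i <= n -> 0 < j <= n ->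
  (kth_pos true s j < kth_pos false s i) = (xcoord s j < i).
Proof.
move=> hd hi hj.
have [hs ht hf hpre] := dyckP hd.
have [q1 q2 q3] := qk_spec hd hi.
have [p1 p2 p3 p4] := pk_spec hd hj.
case: (ltngtP (kth_pos true s j) (kth_pos false s i)) => h.
- apply/esym; rewrite /xcoord.
  have := count_take_mono (pred1 false) s (ltnW h); rewrite q3 => H.
  apply: leq_ltn_trans H _; rewrite ltn_predL; by case/andP: hi.
- apply/esym/negbTE; rewrite -leqNgt /xcoord.
  have := count_take_mono (pred1 false) s h.
  rewrite (take_nth true); last by rewrite hs.
  by rewrite -cats1 count_cat q3 /= q2; lia.
- by move: p2; rewrite h (set_nth_default true) ?q2 // hs.
Qed.

Lemma ycoordE n s i : is_dyck n s -> 0 < i <= n ->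
  ycoord s i = count (fun j => xcoord s j < i) (iota 1 n).
Proof.
move=> hd hi; have [hs ht hf hpre] := dyckP hd.
rewrite /ycoord count_take_pos.
have e : pos true s = [seq kth_pos true s j | j <- iota 1 n].
  rewrite -(addn0 1) iotaDl -map_comp.
  have := map_nth_iota0 0 (leqnn (size (pos true s))).
  rewrite take_size size_pos ht => {1}<-; by apply: eq_map.
rewrite e count_map; apply: eq_in_count => j; rewrite mem_iota => hj.
apply: galois => //; lia.
Qed.

Lemma rowvE n s k : is_dyck n s -> 0 < k <= n ->
  row_has_valley s k = (xcoord s k != xcoord s k.-1).
Proof.
move=> hd hk; have [hs ht hf hpre] := dyckP hd.
have [p1 p2 p3 p4] := pk_spec hd hk.
have xl := x_lt hd hk.
case: k hk p1 p2 p3 p4 xl => [//|[|k]] hk p1 p2 p3 p4 xl.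
  rewrite eqxx /row_has_valley p4; move: xl; rewrite ltnS leqn0 => /eqP ->.
  by [].
have hk' : 0 < k.+1 <= n by lia.
have [p1' p2' p3' p4'] := pk_spec hd hk'.
have xm := x_mono hd (isT : 0 < k.+1) (leqnSn _) (proj2 (andP hk)).
set p := kth_pos true s k.+2 in p1 p2 p3 p4 *.
set p' := kth_pos true s k.+1 in p1' p2' p3' p4' xm *.
rewrite /row_has_valley -/p /=.
have pp : p' < p by lia.
have pp1 : p.-1 < size s by rewrite hs; lia.
have e1 := take_nth true pp1; rewrite prednK in e1; last lia.
have c1 := count_tf (take p.-1 s); rewrite size_take pp1 in c1.
have c2 := count_tf (take p' s); rewrite size_take hs p1' in c2.
case hn : (nth true s p.-1) => /=.
  have hx : count_mem true (take p.-1 s) = k by move: p3; rewrite e1 -cats1 count_cat hn /=; lia.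
  have : p' = p.-1.
    apply/eqP; rewrite eqn_leq -ltnS prednK ?pp //=; last lia.
    rewrite leqNgt; apply/negP => hlt.
    have := count_take_mono (pred1 true) s hlt.
    rewrite (take_nth false) ?hs // -cats1 count_cat p2' p3' hx /=; lia.
  move=> e; rewrite andbF; suff -> : xcoord s k.+2 = xcoord s k.+1 by rewrite eqxx.
  rewrite /xcoord -/p -/p' e1 -cats1 count_cat hn e /=; lia.
have p0 : 0 < p by lia.
rewrite p0 /=.
have E2 : count_mem false (take p s) = count_mem false (take p.-1 s) + 1.
  by rewrite e1 -cats1 count_cat hn.
have hle : p' <= p.-1 by lia.
have := count_take_mono (pred1 false) s hle => h1.
by apply/esym/eqP; rewrite /xcoord -/p -/p' E2 => E; move: h1; rewrite -E addn1 ltnn.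
Qed.

Lemma cmem_take_mono (b : bool) s m m' : m <= m' ->
  count_mem b (take m s) <= count_mem b (take m' s).
Proof. exact: count_take_mono. Qed.

End Part1.
Import Part1.

Module Part2.
Set Implicit Arguments. Unset Strict Implicit. Unset Printing Implicit Defensive.

Definition colX n (xs : seq nat) k := has (fun j => nth 0 xs j == k) (iota 1 n).
Definition CX n xs v := count (colX n xs) (iota 1 v).
Definition rowX (xs : seq nat) k := nth 0 xs k != nth 0 xs k.-1.
Definition RX xs k := count (rowX xs) (iota 1 k).
Definition YX n (xs : seq nat) i := count (fun j => nth 0 xs j < i) (iota 1 n).

Definition validX n (xs : seq nat) :=
  [/\ nth 0 xs 0 = 0, forall k, 0 < k <= n -> nth 0 xs k < k &
      forall k, k < n -> nth 0 xs k <= nth 0 xs k.+1].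

Lemma iotaS1 m : iota 1 m.+1 = iota 1 m ++ [:: m.+1].
Proof. by have := iotaD 1 m 1; rewrite addn1 add1n. Qed.

Lemma countS1 (a : pred nat) m : count a (iota 1 m.+1) = count a (iota 1 m) + a m.+1.
Proof. by rewrite iotaS1 count_cat /= addn0. Qed.

Lemma monoX n xs i j : validX n xs -> i <= j -> j <= n -> nth 0 xs i <= nth 0 xs j.
Proof.
move=> [_ _ hm] ij; elim: j ij => [|j IH]; first by rewrite leqn0 => /eqP ->.
rewrite leq_eqVlt => /orP [/eqP ->//|]; rewrite ltnS => ij jn.
exact: leq_trans (IH ij (ltnW jn)) (hm _ jn).
Qed.

Lemma C_mono n xs a b : a <= b -> CX n xs a <= CX n xs b.
Proof. by move/subnKC <-; rewrite /CX iotaD count_cat leq_addr. Qed.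

Lemma C_flat n xs a b : a <= b -> (forall v, a < v <= b -> ~~ colX n xs v) ->
  CX n xs b = CX n xs a.
Proof.
elim: b => [|b IH]; first by rewrite leqn0 => /eqP ->.
rewrite leq_eqVlt => /orP [/eqP ->//|]; rewrite ltnS => ab h.
rewrite /CX countS1 -/(CX n xs b) IH //; last by move=> v hv; apply: h; lia.
by rewrite (negbTE (h b.+1 _)) ?addn0 //; lia.
Qed.

Lemma colX_x n xs k : 0 < k <= n -> colX n xs (nth 0 xs k).
Proof. by move=> hk; apply/hasP; exists k => //; rewrite mem_iota; lia. Qed.

Lemma colXP n xs v : reflect (exists2 j, 0 < j <= n & nth 0 xs j = v) (colX n xs v).
Proof.
apply: (iffP hasP) => [[j]|[j hj <-]].
  by rewrite mem_iota => hj /eqP <-; exists j => //; lia.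
by exists j; rewrite ?mem_iota //; lia.
Qed.

Lemma C_step n xs v : 0 < v -> colX n xs v -> CX n xs v = (CX n xs v.-1).+1.
Proof. by case: v => // v _ h; rewrite /CX countS1 h addn1. Qed.

Lemma no_val_between n xs k v : validX n xs -> k < n ->
  nth 0 xs k < v < nth 0 xs k.+1 -> ~~ colX n xs v.
Proof.
move=> hv kn hkv; apply/colXP => -[j hj e].
case: (leqP j k) => jk.
  have := monoX hv jk (ltnW kn); lia.
have := monoX hv jk (proj2 (andP hj)); lia.
Qed.

Lemma GX1 n xs k : validX n xs -> k <= n -> CX n xs (nth 0 xs k) = RX xs k.
Proof.
move=> hv; have [h0 hl hm] := hv.
elim: k => [|k IH] hk; first by rewrite h0.
rewrite /RX countS1 -/(RX xs k) -IH ?(ltnW hk) // /rowX /=.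
case: eqP => [->|ne]; first by rewrite addn0.
have lt : nth 0 xs k < nth 0 xs k.+1 by have := hm k hk; lia.
rewrite C_step ?colX_x //; last lia.
rewrite (C_flat (a := nth 0 xs k)) ?addn1 //; first lia.
move=> v hv'; apply: (no_val_between hv hk); lia.
Qed.

Lemma GX3 n xs : validX n xs -> CX n xs n = CX n xs (nth 0 xs n).
Proof.
move=> hv; have [h0 hl hm] := hv.
have xn : nth 0 xs n <= n.
  case: n hv hl {hm} => [|n] hv hl; first by rewrite h0.
  by apply: ltnW; apply: hl; lia.
apply: C_flat => // v hv'; apply/colXP => -[j hj e].
have := monoX hv (proj2 (andP hj)) (leqnn n); lia.
Qed.

Lemma GX4 n xs k : validX n xs -> 0 < k <= n -> rowX xs k ->
  CX n xs (nth 0 xs k.-1) < CX n xs k.-1.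
Proof.
move=> hv hk hr; have [h0 hl hm] := hv.
have hk1 : k.-1 < n by lia.
have lt : nth 0 xs k.-1 < nth 0 xs k.
  have := hm _ hk1; rewrite prednK; last lia.
  by move: hr; rewrite /rowX; lia.
have := hl k hk => hxk.
have := C_mono n xs (_ : nth 0 xs k <= k.-1) => /(_ ltac:(lia)).
rewrite C_step ?colX_x //; last lia.
have := C_mono n xs (_ : nth 0 xs k.-1 <= (nth 0 xs k).-1) => /(_ ltac:(lia)).
lia.
Qed.

Lemma count_down (p : pred nat) n :
  (forall j j', 0 < j -> j <= j' -> j' <= n -> p j' -> p j) ->
  forall j, 0 < j <= n -> p j = (j <= count p (iota 1 n)).
Proof.
elim: n => [|n IH] hd j hj; first lia.
rewrite countS1.
have hd' : forall j j', 0 < j -> j <= j' -> j' <= n -> p j' -> p j.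
  by move=> a b ha hab hb; apply: hd => //; lia.
case hp : (p n.+1).
  have -> : count p (iota 1 n) = n.
    rewrite -[RHS](size_iota 1 n); apply/eqP; rewrite -all_count; apply/allP => a.
    rewrite mem_iota => ha; apply: (hd a n.+1) => //; lia.
  rewrite (hd j n.+1) //; change (nat_of_bool true) with 1; lia.
change (nat_of_bool false) with 0; rewrite addn0; case: (ltngtP j n.+1) => hjn; first by apply: IH => //; lia.
- lia.
rewrite hjn hp; have := count_size p (iota 1 n); rewrite size_iota; lia.
Qed.

Lemma Y_prefix n xs i j : validX n xs -> 0 < j <= n ->
  (nth 0 xs j < i) = (j <= YX n xs i).
Proof.
move=> hv hj; apply: (count_down (p := fun j => nth 0 xs j < i)) => //.
move=> a b ha hab hb /=; have := monoX hv hab hb; lia.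
Qed.

Lemma YS n xs k : YX n xs k.+1 = YX n xs k + count (fun j => nth 0 xs j == k) (iota 1 n).
Proof.
rewrite /YX -count_predUI.
rewrite (eq_count (a1 := predI _ _) (a2 := pred0)); last by move=> j /=; lia.
rewrite count_pred0 addn0; apply: eq_count => j /=; lia.
Qed.

Lemma YS_nocol n xs k : ~~ colX n xs k -> YX n xs k.+1 = YX n xs k.
Proof. by rewrite YS /colX has_count -eqn0Ngt => /eqP ->; rewrite addn0. Qed.

Lemma Y_le n xs i : YX n xs i <= n.
Proof. by have := count_size (fun j => nth 0 xs j < i) (iota 1 n); rewrite size_iota. Qed.

Lemma Y_ge n xs k : validX n xs -> 0 < k <= n -> k <= YX n xs k.
Proof. move=> hv hk; rewrite -Y_prefix //; have [_ hl _] := hv; exact: hl. Qed.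

Lemma Y_top n xs : validX n xs -> YX n xs n.+1 = n.
Proof.
move=> hv; have [h0 hl hm] := hv.
rewrite /YX -[RHS](size_iota 1 n); apply/eqP; rewrite -all_count; apply/allP => a.
rewrite mem_iota => ha /=; have := hl a; lia.
Qed.

Lemma GX2 n xs k : validX n xs -> 0 < k <= n -> ~~ colX n xs k ->
  (nth 0 xs (YX n xs k.+1) == nth 0 xs k.-1) =
  (CX n xs k.-1 == CX n xs (nth 0 xs k.-1)).
Proof.
move=> hv hk hc; have [h0 hl hm] := hv.
rewrite YS_nocol //; set Y := YX n xs k.
have kY : k <= Y by apply: Y_ge.
have Yn : Y <= n by apply: Y_le.
have xY : nth 0 xs Y < k by rewrite (Y_prefix k hv) //; lia.
have xkY : nth 0 xs k.-1 <= nth 0 xs Y by apply: (monoX hv); lia.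
have xk1 : nth 0 xs k.-1 <= k.-1.
  case: (posnP k.-1) => [->|kp]; first by rewrite h0.
  by have := hl k.-1; lia.
apply/eqP/eqP => [e|e].
  apply: C_flat => // v hv'; apply/colXP => -[j hj ej].
  case: (leqP j k.-1) => jk.
    have := monoX hv jk (_ : k.-1 <= n) => /(_ ltac:(lia)); lia.
  have : j <= Y by rewrite -Y_prefix //; lia.
  move/(monoX hv) => /(_ Yn); lia.
apply/eqP; rewrite eqn_leq xkY andbT leqNgt; apply/negP => lt.
have := C_mono n xs (_ : nth 0 xs Y <= k.-1) => /(_ ltac:(lia)).
rewrite C_step; [|lia|apply: colX_x; lia].
have := C_mono n xs (_ : nth 0 xs k.-1 <= (nth 0 xs Y).-1) => /(_ ltac:(lia)).
lia.
Qed.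

End Part2.
Import Part2.

Module Part3.
Set Implicit Arguments. Unset Strict Implicit. Unset Printing Implicit Defensive.
Import GRing.Theory Num.Theory.
Local Open Scope ring_scope.

Definition Hm (m : seq 'I_3) k := mheight (take k m).
Definition stv (m : seq 'I_3) k : nat := val (nth ord0 m k.-1).
Definition colm m k := (stv m k == 0)%N || ((stv m k == 2)%N && (0 < Hm m k.-1)).
Definition rowm m k := (stv m k == 1)%N || ((stv m k == 2)%N && (0 < Hm m k.-1)).
Definition Cm m v := count (colm m) (iota 1 v).
Definition Rm m k := count (rowm m) (iota 1 k).

Lemma mheight_cat s t : mheight (s ++ t) = mheight s + mheight t.
Proof. by elim: s => [|a s IH] /=; rewrite ?add0r // IH addrA. Qed.

Lemma H_S m k : (k < size m)%N -> Hm m k.+1 = Hm m k + mstep (nth ord0 m k).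
Proof.
move=> hk; rewrite /Hm (take_nth ord0 hk) -cats1 mheight_cat /mheight /= addr0 //.
Qed.

Lemma stv_lt m k : (stv m k < 3)%N.
Proof. exact: ltn_ord. Qed.

Lemma H_CR m k : (k <= size m)%N -> Hm m k = (Cm m k)%:Z - (Rm m k)%:Z.
Proof.
elim: k => [|k IH] hk; first by rewrite /Hm take0 /Cm /Rm /= subrr.
rewrite H_S // IH ?(ltnW hk) // /Cm /Rm !countS1 -/(Cm m k) -/(Rm m k).
rewrite /colm /rowm /stv /= /mstep.
case: (nth ord0 m k) => -[|[|[|?]]] //= _; rewrite ?PoszD; try lia.
Qed.

Lemma motzP m : is_motzkin m ->
  Hm m (size m) = 0 /\ forall k, (k <= size m)%N -> 0 <= Hm m k.
Proof.
case/andP => /eqP h /allP ha; split; first by rewrite /Hm take_size.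
by move=> k hk; apply: ha; rewrite mem_iota.
Qed.

Lemma row_pos m k : is_motzkin m -> (0 < k <= size m)%N -> rowm m k -> 0 < Hm m k.-1.
Proof.
move=> hm hk; have [he hn] := motzP hm.
have hk1 : (k.-1 < size m)%N by lia.
have := hn _ (proj2 (andP hk)); rewrite -{1}(prednK (_ : (0 < k)%N)); last lia.
rewrite H_S // /rowm /stv /mstep.
case: (nth ord0 m k.-1) => -[|[|[|?]]] //= _; try lia.
Qed.

Lemma RleC m k : is_motzkin m -> (0 < k <= size m)%N -> (Rm m k <= Cm m k.-1)%N.
Proof.
move=> hm hk; have [he hn] := motzP hm.
have hk1 : (k.-1 <= size m)%N by lia.
have h1 := H_CR hk1; have h2 := hn _ hk1.
rewrite /Rm -(prednK (_ : (0 < k)%N)); last lia.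
rewrite countS1 -/(Rm m k.-1) prednK; last lia.
case hr : (rowm m k); last by rewrite addn0; lia.
have := row_pos hm hk hr; rewrite h1; lia.
Qed.

Lemma CReq m : is_motzkin m -> Cm m (size m) = Rm m (size m).
Proof. move=> hm; have [he hn] := motzP hm; have := H_CR (leqnn (size m)); lia. Qed.

Lemma find_iota (p : pred nat) N w : (w < N)%N -> p w ->
  let v := find p (iota 0 N) in
  [/\ (v <= w)%N, p v & forall u, (u < v)%N -> ~~ p u].
Proof.
move=> wN pw v.
have hh : has p (iota 0 N) by apply/hasP; exists w; rewrite ?mem_iota.
have vN : (v < N)%N by rewrite -(size_iota 0 N) -has_find.
have pv : p v by have := nth_find 0 hh; rewrite nth_iota.
have bef : forall u, (u < v)%N -> ~~ p u.
  move=> u uv; have := before_find 0 uv; rewrite nth_iota ?add0n => [->//|]; lia.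
split => //; rewrite leqNgt; apply/negP => /bef; by rewrite pw.
Qed.

Lemma find_iota_eq (p : pred nat) N v : (v < N)%N -> p v ->
  (forall u, (u < v)%N -> ~~ p u) -> find p (iota 0 N) = v.
Proof.
move=> vN pv hb; have [h1 h2 h3] := find_iota vN pv.
apply/eqP; rewrite eqn_leq h1 /= leqNgt; apply/negP => /hb; by rewrite h2.
Qed.

Definition Xm m k := find (fun v => Rm m k <= Cm m v)%N (iota 0 (size m)).
Definition xsM m := map (Xm m) (iota 0 (size m).+1).

Lemma nth_xsM m k : (k <= size m)%N -> nth 0%N (xsM m) k = Xm m k.
Proof. by move=> hk; rewrite (nth_map 0%N) ?size_iota ?nth_iota //; lia. Qed.

Lemma Cm_S m v : Cm m v.+1 = (Cm m v + colm m v.+1)%N.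
Proof. by rewrite /Cm countS1. Qed.
Lemma Rm_S m v : Rm m v.+1 = (Rm m v + rowm m v.+1)%N.
Proof. by rewrite /Rm countS1. Qed.

Lemma Cm_mono m a b : (a <= b)%N -> (Cm m a <= Cm m b)%N.
Proof. by move/subnKC <-; rewrite /Cm iotaD count_cat leq_addr. Qed.

Lemma Xm_spec m k : is_motzkin m -> (0 < size m)%N -> (k <= size m)%N ->
  [/\ (Xm m k <= k.-1)%N, Cm m (Xm m k) = Rm m k &
      forall u, (u < Xm m k)%N -> (Cm m u < Rm m k)%N].
Proof.
move=> hm n0 hk.
have pw : (Rm m k <= Cm m k.-1)%N.
  case: (posnP k) => [->|k0]; first by rewrite /Rm.
  by apply: RleC => //; lia.
have hkn : (k.-1 < size m)%N by lia.
have [h1 h2 h3] := @find_iota (fun v => Rm m k <= Cm m v)%N _ _ hkn pw.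
rewrite /Xm; split => //; last by move=> u /h3; rewrite -ltnNge.
set v := find _ _ in h1 h2 h3 *.
case: (posnP v) => [v0|vp].
  apply/eqP; rewrite eqn_leq h2 andbT; move: h2; rewrite v0 /Cm /=; done.
have := h3 v.-1 (_ : (v.-1 < v)%N) => /(_ ltac:(lia)); rewrite -ltnNge => lt.
have := Cm_S m v.-1; rewrite prednK // => e.
apply/eqP; rewrite eqn_leq h2 andbT; move: lt; rewrite e; case: (colm m v); lia.
Qed.

Lemma ivt (f : nat -> nat) N c : (f 0 <= c <= f N)%N ->
  (forall i, (i < N)%N -> (f i.+1 <= (f i).+1)%N) -> exists2 j, (j <= N)%N & f j = c.
Proof.
elim: N => [|N IH] hc hs; first by exists 0%N => //; lia.
case: (leqP c (f N)) => h.
  have hc' : (f 0 <= c <= f N)%N by lia.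
  have [j hj e] := IH hc' (fun i hi => hs i (ltnW hi)).
  by exists j => //; lia.
by exists N.+1 => //; have := hs N (ltnSn N); lia.
Qed.

Lemma Rm_step m i : (Rm m i.+1 <= (Rm m i).+1)%N.
Proof. rewrite Rm_S; case: (rowm m _); lia. Qed.

Lemma Xm_mono m k : is_motzkin m -> (0 < size m)%N -> (k < size m)%N ->
  (Xm m k <= Xm m k.+1)%N.
Proof.
move=> hm n0 hk.
have [a1 a2 a3] := Xm_spec hm n0 (ltnW hk).
have [b1 b2 b3] := Xm_spec hm n0 hk.
rewrite leqNgt; apply/negP => /a3; rewrite b2.
have := Rm_step m k; rewrite Rm_S; case: (rowm m _); lia.
Qed.

Lemma valid_xsM m : is_motzkin m -> (0 < size m)%N -> validX (size m) (xsM m).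
Proof.
move=> hm n0; split.
- rewrite nth_xsM //; have [h1 _ _] := Xm_spec hm n0 (leq0n _); lia.
- move=> k hk; rewrite nth_xsM; last lia.
  have hk' : (k <= size m)%N by lia.
  have [h1 _ _] := Xm_spec hm n0 hk'; lia.
- move=> k hk; rewrite !nth_xsM ?(ltnW hk) //; exact: Xm_mono.
Qed.

Lemma colm_last m : is_motzkin m -> (0 < size m)%N -> colm m (size m) = false.
Proof.
move=> hm n0; have h1 := CReq hm.
have hh : (0 < size m <= size m)%N by lia.
have h2 := RleC hm hh.
have e := Cm_S m (size m).-1; rewrite prednK // in e.
move: e; case: (colm m (size m)) => // e; lia.
Qed.

Lemma colX_xsM m v : is_motzkin m -> (0 < size m)%N -> (0 < v <= size m)%N ->
  colX (size m) (xsM m) v = colm m v.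
Proof.
move=> hm n0 hv; apply/colXP/idP => [[j hj]|hc].
  rewrite nth_xsM; last lia.
  have hj' : (j <= size m)%N by lia.
  have [h1 h2 h3] := Xm_spec hm n0 hj' => e.
  rewrite e in h1 h2 h3; have := h3 v.-1 (_ : (v.-1 < v)%N) => /(_ ltac:(lia)).
  have := Cm_S m v.-1; rewrite prednK ?h2; last lia.
  case: (colm m v) => //; lia.
have vn : (v < size m)%N.
  rewrite ltn_neqAle; case/andP: hv => _ ->; rewrite andbT.
  by apply/eqP => e; move: hc; rewrite e colm_last.
have cv : Cm m v = (Cm m v.-1).+1.
  by have := Cm_S m v.-1; rewrite prednK ?hc; lia.
have [j hj ej] : exists2 j, (j <= size m)%N & Rm m j = Cm m v.
  apply: ivt; last by move=> i _; apply: Rm_step.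
  rewrite /Rm /= -/(Rm m (size m)) -(CReq hm) Cm_mono; lia.
exists j; first by apply/andP; split => //; case: (posnP j) => j0 //; move: ej; rewrite j0 /Rm cv.
rewrite nth_xsM // /Xm ej; apply: find_iota_eq => // u uv.
rewrite -ltnNge cv ltnS; apply: Cm_mono; lia.
Qed.

Lemma rowX_xsM m k : is_motzkin m -> (0 < size m)%N -> (0 < k <= size m)%N ->
  rowX (xsM m) k = rowm m k.
Proof.
move=> hm n0 hk; rewrite /rowX !nth_xsM; try lia.
have hk1 : (k <= size m)%N by lia.
have [a1 a2 a3] := Xm_spec hm n0 hk1.
have hk2 : (k.-1 <= size m)%N by lia.
have [b1 b2 b3] := Xm_spec hm n0 hk2.
have e := Rm_S m k.-1; rewrite prednK in e; last lia.
case hr : (rowm m k); rewrite hr in e.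
  by apply/negP => /eqP ex; move: a2 b2; rewrite ex; lia.
by rewrite /Xm e addn0 eqxx.
Qed.

End Part3.
Import Part3.

Module Part4.
Set Implicit Arguments. Unset Strict Implicit. Unset Printing Implicit Defensive.
Import GRing.Theory Num.Theory.

Definition stepX n xs k : 'I_3 :=
  if colX n xs k && ~~ rowX xs k then inord 0
  else if rowX xs k && ~~ colX n xs k then inord 1 else inord 2.
Definition phiX n xs := map (stepX n xs) (iota 1 n).
Definition condAX n xs := all (fun k => [|| rowX xs k, colX n xs k |
   nth 0 xs (YX n xs k.+1) == nth 0 xs k.-1]) (iota 1 n).
Definition condBX n xs := all (fun k => rowX xs k || colX n xs k) (iota 1 n).

Lemma CX_Cm m v : is_motzkin m -> (0 < size m)%N -> (v <= size m)%N ->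
  CX (size m) (xsM m) v = Cm m v.
Proof.
move=> hm n0 hv; apply: eq_in_count => u; rewrite mem_iota => hu.
apply: colX_xsM => //; lia.
Qed.

Lemma nth_phiX n xs i : (i < n)%N -> nth ord0 (phiX n xs) i = stepX n xs i.+1.
Proof. by move=> hi; rewrite (nth_map 0%N) ?size_iota ?nth_iota // add1n. Qed.

Lemma size_phiX n xs : size (phiX n xs) = n.
Proof. by rewrite size_map size_iota. Qed.

Lemma M2 m : is_motzkin m -> (0 < size m)%N ->
  [/\ validX (size m) (xsM m), condAX (size m) (xsM m) & phiX (size m) (xsM m) = m].
Proof.
move=> hm n0; have hv := valid_xsM hm n0.
have hcr : forall k, (0 < k <= size m)%N ->
    colX (size m) (xsM m) k = colm m k /\ rowX (xsM m) k = rowm m k.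
  by move=> k hk; rewrite colX_xsM ?rowX_xsM.
split => //.
  apply/allP => k; rewrite mem_iota => hk.
  have hk' : (0 < k <= size m)%N by lia.
  have [-> ->] := hcr k hk'.
  case hr : (rowm m k) => //; case hc : (colm m k) => //=.
  have [he hn] := motzP hm.
  have hH : Hm m k.-1 = 0.
    move: hr hc; rewrite /rowm /colm; have := hn k.-1 (_ : (k.-1 <= size m)%N) => /(_ ltac:(lia)).
    move: (stv_lt m k); case: (stv m k) => [|[|[|?]]] //=; try lia.
  have hk1 : (k.-1 <= size m)%N by lia.
  have := H_CR hk1; rewrite hH => hCR.
  rewrite GX2 //; last by rewrite colX_xsM // hc.
  rewrite !CX_Cm //; last first.
    have [h1 _ _] := Xm_spec hm n0 hk1; rewrite nth_xsM //; lia.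
  rewrite nth_xsM //; have [_ -> _] := Xm_spec hm n0 hk1; lia.
apply: (@eq_from_nth _ ord0); first by rewrite size_phiX.
move=> i; rewrite size_phiX => hi; rewrite nth_phiX // /stepX.
have hi1 : (0 < i.+1 <= size m)%N by lia.
have [-> ->] := hcr i.+1 hi1.
rewrite /colm /rowm /stv /=.
case: (nth ord0 m i) => -[|[|[|?]]] //= p; try (apply: val_inj => /=; rewrite inordK //).
by case: (0 < Hm m i)%R; apply: val_inj => /=; rewrite inordK.
Qed.

Lemma stv_phiX n xs k : (0 < k <= n)%N ->
  stv (phiX n xs) k = if colX n xs k && ~~ rowX xs k then 0%N
                      else if rowX xs k && ~~ colX n xs k then 1%N else 2%N.
Proof.
move=> hk; rewrite /stv nth_phiX; last lia.
rewrite prednK; last lia.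
by rewrite /stepX; case: (colX _ _ _); case: (rowX _ _) => /=; rewrite inordK.
Qed.

Lemma M1_ind n xs : validX n xs -> condAX n xs -> forall k, (k <= n)%N ->
  forall j, (0 < j <= k)%N ->
  colm (phiX n xs) j = colX n xs j /\ rowm (phiX n xs) j = rowX xs j.
Proof.
move=> hv hA; elim => [|k IH] hk j hj; first lia.
case: (ltnP j k.+1) => hjk; first by apply: IH; lia.
have -> : j = k.+1 by lia.
set m := phiX n xs.
have eC : Cm m k = CX n xs k.
  apply: eq_in_count => u; rewrite mem_iota => hu.
  have hu' : (0 < u <= k)%N by lia.
  by have [] := IH (ltnW hk) u hu'.
have eR : Rm m k = RX xs k.
  apply: eq_in_count => u; rewrite mem_iota => hu.
  have hu' : (0 < u <= k)%N by lia.
  by have [] := IH (ltnW hk) u hu'.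
have hH : Hm m k = (Posz (CX n xs k) - Posz (RX xs k))%R.
  by rewrite H_CR ?eC ?eR // size_phiX ltnW.
have hk1 : (0 < k.+1 <= n)%N by lia.
rewrite /colm /rowm stv_phiX //= hH.
case hc : (colX n xs k.+1); case hr : (rowX xs k.+1) => //=.
  have := GX4 hv hk1 hr; rewrite /= GX1 ?(ltnW hk) //; lia.
have := allP hA k.+1; rewrite mem_iota hc hr /= => /(_ ltac:(lia)).
rewrite GX2 //; last by rewrite hc.
by rewrite /= GX1 ?(ltnW hk) // => /eqP ->; rewrite subrr.
Qed.

Lemma M1_H n xs k : validX n xs -> condAX n xs -> (k <= n)%N ->
  Hm (phiX n xs) k = (Posz (CX n xs k) - Posz (CX n xs (nth 0 xs k)))%R.
Proof.
move=> hv hA hk; set m := phiX n xs.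
have e : forall u, (0 < u <= k)%N -> colm m u = colX n xs u /\ rowm m u = rowX xs u.
  by move=> u hu; apply: (M1_ind hv hA hk).
rewrite H_CR ?size_phiX // GX1 //.
congr (Posz _ - Posz _)%R; apply: eq_in_count => u; rewrite mem_iota => hu;
  have hu' : (0 < u <= k)%N by lia.
  by have [] := e u hu'.
by have [] := e u hu'.
Qed.

Lemma M1 n xs : validX n xs -> condAX n xs -> size xs = n.+1 -> (0 < n)%N ->
  [/\ is_motzkin (phiX n xs), xsM (phiX n xs) = xs &
      condBX n xs = is_riordan (phiX n xs)].
Proof.
move=> hv hA hs n0; set m := phiX n xs.
have [h0 hl hm] := hv.
have xle : forall k, (k <= n)%N -> (nth 0 xs k <= k)%N.
  move=> k hk; case: (posnP k) => [->|k0]; first by rewrite h0.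
  by apply: ltnW; apply: hl; lia.
have xlt : forall k, (k <= n)%N -> (nth 0 xs k < n)%N.
  move=> k hk; case: (posnP k) => [->|k0]; first by rewrite h0.
  by have := hl k; lia.
have Hnn : forall k, (k <= n)%N -> (0 <= Hm m k)%R.
  by move=> k hk; rewrite M1_H // subr_ge0 lez_nat C_mono // xle.
have hmz : is_motzkin m.
  apply/andP; split.
    by have := M1_H hv hA (leqnn n); rewrite -(GX3 hv) subrr /Hm -{1}(size_phiX n xs) take_size => ->.
  apply/allP => k; rewrite mem_iota size_phiX => hk; apply: Hnn; lia.
have eC : forall v, (v <= n)%N -> Cm m v = CX n xs v.
  move=> v hv'; apply: eq_in_count => u; rewrite mem_iota => hu.
  have hu' : (0 < u <= v)%N by lia.
  by have [] := M1_ind hv hA hv' hu'.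
have eR : forall v, (v <= n)%N -> Rm m v = RX xs v.
  move=> v hv'; apply: eq_in_count => u; rewrite mem_iota => hu.
  have hu' : (0 < u <= v)%N by lia.
  by have [] := M1_ind hv hA hv' hu'.
split => //.
  apply: (@eq_from_nth _ 0%N); first by rewrite size_map size_iota size_phiX hs.
  move=> k; rewrite size_map size_iota size_phiX => hk.
  rewrite nth_xsM; last by rewrite size_phiX; lia.
  have hkn : (k <= n)%N by lia.
  rewrite /Xm size_phiX; apply: find_iota_eq.
  - exact: xlt.
  - by rewrite (eR k hkn) (eC _ (ltnW (xlt k hkn))) (GX1 hv hkn).
  - move=> u hu; rewrite -ltnNge (eR k hkn) (eC u); last first.
      by apply: ltnW; apply: leq_trans (xlt k hkn); apply: ltnW.
    rewrite -(GX1 hv hkn).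
    have k0 : (0 < k)%N by case: (posnP k) hu => // ->; rewrite h0.
    rewrite (C_step (v := nth 0 xs k)); [|lia|apply: colX_x; lia].
    by rewrite ltnS C_mono //; lia.
rewrite /is_riordan hmz /= /condBX size_phiX.
rewrite (_ : iota 1 n = map succn (iota 0 n)); last by rewrite -(addn0 1) iotaDl.
rewrite all_map; apply: eq_in_all => i; rewrite mem_iota => hi /=.
have hi1 : (0 < i.+1 <= n)%N by lia.
have hin : (i.+1 <= n)%N by lia.
have hjj : (0 < i.+1 <= i.+1)%N by rewrite leqnn.
have [hc hr] := M1_ind hv hA hin hjj.
have := Hnn i (_ : (i <= n)%N) => /(_ ltac:(lia)).
move: hc hr; rewrite /colm /rowm stv_phiX // /stv /=.
rewrite nth_phiX; last lia; rewrite /stepX -/(Hm m i).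
case: (colX n xs i.+1); case: (rowX xs i.+1) => /=; rewrite ?inordK //=.
- by rewrite /m => H _ _; move: H; rewrite lt0r => /andP [].
- rewrite /m => H _ H2; apply/esym/negbTE; rewrite negbK; apply/eqP.
  by move: H; rewrite lt0r H2 andbT => /negbT; rewrite negbK => /eqP.
Qed.

End Part4.
Import Part4.

Module Part5.
Set Implicit Arguments. Unset Strict Implicit. Unset Printing Implicit Defensive.
Import GRing.Theory Num.Theory.

Definition xsOf n (t : seq bool) := map (xcoord t) (iota 0 n.+1).
Definition wordX n xs : seq bool :=
  map (fun i => has (fun k => k.-1 + nth 0 xs k == i) (iota 1 n)) (iota 0 (2 * n)).

Lemma nth_xsOf n t k : k <= n -> nth 0 (xsOf n t) k = xcoord t k.
Proof. by move=> hk; rewrite (nth_map 0) ?size_iota ?nth_iota //; lia. Qed.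

Lemma pos_map n t : is_dyck n t -> pos true t = map (kth_pos true t) (iota 1 n).
Proof.
move=> hd; have [hs ht hf hpre] := dyckP hd.
rewrite -(addn0 1) iotaDl -map_comp.
have := map_nth_iota0 0 (leqnn (size (pos true t))).
rewrite take_size size_pos ht => {1}<-; by apply: eq_map.
Qed.

Lemma W_valid n t : is_dyck n t -> 0 < n -> validX n (xsOf n t).
Proof.
move=> hd n0; split.
- rewrite nth_xsOf //; have h1 : 0 < 1 <= n by lia.
  have := x_lt hd h1; change (xcoord t 0) with (xcoord t 1); lia.
- by move=> k hk; rewrite nth_xsOf; [apply: x_lt hd hk | lia].
- move=> k hk; rewrite !nth_xsOf //; try lia.
  case: (posnP k) => [->|k0]; first by change (xcoord t 0) with (xcoord t 1).
  by apply: (x_mono hd) => //; lia.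
Qed.

Lemma YX_ycoord n t i : is_dyck n t -> 0 < i <= n ->
  ycoord t i = YX n (xsOf n t) i.
Proof.
move=> hd hi; rewrite (ycoordE hd hi); apply: eq_in_count => j.
by rewrite mem_iota => hj /=; rewrite nth_xsOf //; lia.
Qed.

Lemma careaE n t k : is_dyck n t -> 0 < n -> 0 < k <= n.+1 ->
  carea n t k = ((YX n (xsOf n t) k)%:Z - k%:Z)%R.
Proof.
move=> hd n0 hk; rewrite /carea.
case: ifP => h; first by rewrite (YX_ycoord hd); lia.
have -> : k = n.+1 by lia.
rewrite Y_top; last exact: W_valid.
by rewrite -addn1 PoszD opprD addrA subrr add0r.
Qed.

Lemma inN_E n t k : is_dyck n t -> 0 < k <= n -> inN t k = ~~ rowX (xsOf n t) k.
Proof.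
move=> hd hk; rewrite /inN (rowvE hd hk) /rowX !nth_xsOf //; lia.
Qed.

Lemma inD_E n t k : is_dyck n t -> 0 < n -> 0 < k <= n ->
  inD n t k = ~~ colX n (xsOf n t) k.
Proof.
move=> hd n0 hk; rewrite /inD !careaE //; try lia.
rewrite YS /colX has_count.
case: (count _ _) => [|c]; lia.
Qed.

Lemma inF_E n t k : is_dyck n t -> 0 < n -> 0 < k <= n ->
  inF n t k = (nth 0 (xsOf n t) (YX n (xsOf n t) k.+1) == nth 0 (xsOf n t) k.-1).
Proof.
move=> hd n0 hk; have hv := W_valid hd n0; have [h0 hl hm] := hv.
rewrite /inF careaE //; last lia.
set Y := YX n (xsOf n t) k.+1.
have Y1 : 1 <= Y by rewrite -(Y_prefix _ hv) ?h0 //; have := hl 1; lia.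
have Yn : Y <= n by apply: Y_le.
rewrite (addrC (Posz k.+1)) subrK /=.
rewrite (nth_xsOf t Yn).
case: Y Y1 Yn => [//|Y'] _ Yn.
have hk1 : k.-1 <= n by lia.
rewrite (nth_xsOf t hk1) /rarea.
case: k hk {hk1} => [//|[|k']] hk /=.
  have hx0 : xcoord t 0 = 0 by rewrite -(nth_xsOf t (leq0n n)).
  rewrite hx0; apply/eqP/eqP => h; lia.
apply/eqP/eqP => h; lia.
Qed.

Lemma has_memE (f : nat -> nat) s i : has (fun k => f k == i) s = (i \in map f s).
Proof.
apply/hasP/mapP => [[k hk /eqP <-]|[k hk ->]]; by exists k.
Qed.

Lemma size_wordX n xs : size (wordX n xs) = 2 * n.
Proof. by rewrite size_map size_iota. Qed.

Lemma nth_wordX n xs i : i < 2 * n ->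
  nth false (wordX n xs) i = (i \in map (fun k => k.-1 + nth 0 xs k) (iota 1 n)).
Proof. by move=> hi; rewrite (nth_map 0) ?size_iota // nth_iota // add0n has_memE. Qed.

Lemma W_inv1 n t : is_dyck n t -> 0 < n -> wordX n (xsOf n t) = t.
Proof.
move=> hd n0; have [hs ht hf hpre] := dyckP hd.
apply: (@eq_from_nth _ false); first by rewrite size_wordX hs.
move=> i; rewrite size_wordX => hi; rewrite nth_wordX //.
have -> : map (fun k => k.-1 + nth 0 (xsOf n t) k) (iota 1 n) = pos true t.
  rewrite (pos_map hd); apply/eq_in_map => k; rewrite mem_iota => hk.
  rewrite nth_xsOf; last lia.
  have hk' : 0 < k <= n by lia.
  by have [_ _ _ ->] := pk_spec hd hk'.
by rewrite mem_pos hs hi /=; case: (nth false t i).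
Qed.

Lemma sub_in_count (T : eqType) (a1 a2 : pred T) s :
  {in s, forall x, a1 x -> a2 x} -> count a1 s <= count a2 s.
Proof.
elim: s => //= x s IH h.
have h' : {in s, forall x, a1 x -> a2 x} by move=> y hy; apply: h; rewrite inE hy orbT.
have := IH h'; have := h x (mem_head _ _); case: (a1 x); case: (a2 x) => //=; lia.
Qed.

Lemma cnt2 n i : minn (2 * n) i <= 2 * count (fun k => 2 * k - 2 < i) (iota 1 n).
Proof.
elim: n => [|n IH]; first by rewrite minnC.
rewrite countS1; case: (ltnP (2 * n) i) => h.
  have -> : (2 * n.+1 - 2 < i) = true by apply/idP; lia.
  move: IH; rewrite /=; lia.
have -> : (2 * n.+1 - 2 < i) = false by apply/negbTE; lia.
move: IH; rewrite /=; lia.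
Qed.

Lemma path_iota_rel (r : rel nat) a N :
  (forall k, a <= k -> k.+1 < a.+1 + N -> r k k.+1) -> path r a (iota a.+1 N).
Proof.
elim: N a => [//|N IH] a h /=.
rewrite h //; last lia.
apply: IH => k hk hk'; apply: h; lia.
Qed.

Lemma W_inv2 n xs : validX n xs -> size xs = n.+1 -> 0 < n ->
  is_dyck n (wordX n xs) /\ xsOf n (wordX n xs) = xs.
Proof.
move=> hv hs n0; have [h0 hl hm] := hv.
set w := wordX n xs.
set S := map (fun k => k.-1 + nth 0 xs k) (iota 1 n).
have sortS : sorted ltn S.
  rewrite sorted_map -(prednK n0) /=.
  apply: path_iota_rel => k hk hk' /=; have := hm k; lia.
have allS : forall i, i \in S -> i < 2 * n.
  move=> i /mapP [k]; rewrite mem_iota => hk ->; have := hl k; lia.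
have posw : pos true w = S.
  apply: (irr_sorted_eq ltn_trans ltnn (sorted_pos true w) sortS) => i.
  rewrite mem_pos size_wordX.
  case: (ltnP i (2 * n)) => hi /=; first by rewrite nth_wordX //; case: (_ \in _).
  by apply/esym/negbTE/negP => /allS; lia.
have ctw : count_mem true w = n by rewrite -size_pos posw size_map size_iota.
have xw : forall k, 0 < k <= n -> xcoord w k = nth 0 xs k.
  move=> k hk.
  have hj : k.-1 < size (pos true w) by rewrite posw size_map size_iota; lia.
  have [p1 p2 p3] := pos_nth hj.
  move: p1 p2 p3; rewrite posw (nth_map 0) ?size_iota ?nth_iota; try lia.
  rewrite add1n prednK; last lia.
  move=> p1 p2 p3.
  have := count_tf (take (k.-1 + nth 0 xs k) w); rewrite size_take p1 p3.
  rewrite /xcoord kth_posE posw (nth_map 0) ?size_iota ?nth_iota; try lia.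
  rewrite add1n prednK; last lia; lia.
split.
  apply/and3P; split; first by rewrite size_wordX.
    by rewrite ctw.
  apply/allP => i; rewrite mem_iota size_wordX add0n ltnS => hi.
have ct := count_take_pos true w i; rewrite posw count_map in ct.
  have st : size (take i w) = i.
    by rewrite size_take size_wordX; case: ltnP => //; lia.
  have := count_tf (take i w); rewrite st.
  have := cnt2 n i.
  have : count (fun k => 2 * k - 2 < i) (iota 1 n) <=
         count (preim (fun k => k.-1 + nth 0 xs k) (fun p => p < i)) (iota 1 n).
    apply: sub_in_count => k; rewrite mem_iota => hk /=; have := hl k; lia.
  rewrite -ct; move: (count _ (iota 1 n)) (count_mem true (take i w)) (count_mem false (take i w)) => a T F; lia.
apply: (@eq_from_nth _ 0); first by rewrite size_map size_iota hs.
move=> k; rewrite size_map size_iota => hk; rewrite nth_xsOf //.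
case: (posnP k) => [->|k0]; last by apply: xw; lia.
change (xcoord w 0) with (xcoord w 1); rewrite xw; last lia.
by rewrite h0; have := hl 1; lia.
Qed.

End Part5.
Import Part5.

Module Part6.
Set Implicit Arguments. Unset Strict Implicit. Unset Printing Implicit Defensive.

Lemma card_bij (T U : finType) (P : pred T) (Q : pred U) (f : T -> U) (g : U -> T) :
  (forall x, P x -> Q (f x) /\ g (f x) = x) ->
  (forall y, Q y -> P (g y) /\ f (g y) = y) -> #|P| = #|Q|.
Proof.
move=> h1 h2.
have l1 : forall (T U : finType) (P : pred T) (Q : pred U) (f : T -> U) (g : U -> T),
    (forall x, P x -> Q (f x) /\ g (f x) = x) -> #|P| <= #|Q|.
  move=> T' U' P' Q' f' g' h.
  rewrite -(card_in_imset (f := f') (D := P')).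
    apply: subset_leq_card; apply/subsetP => y /imsetP [x hx ->].
    by have [] := h x hx.
  move=> x y hx hy e; have [_ <-] := h x hx; have [_ <-] := h y hy; by rewrite e.
apply/eqP; rewrite eqn_leq (l1 _ _ _ _ _ _ h1) (l1 _ _ _ _ _ _ h2) //.
Qed.

Lemma val_mktuple (T : Type) (x0 : T) N (s : seq T) : size s = N ->
  val [tuple nth x0 s i | i < N] = s.
Proof.
move=> hs; apply: (@eq_from_nth _ x0); first by rewrite size_tuple.
move=> i; rewrite size_tuple => hi.
by rewrite -(nth_mktuple (fun j : 'I_N => nth x0 s j) x0 (Ordinal hi)).
Qed.

Lemma condA_E n t : is_dyck n t -> 0 < n ->
  all (fun k => (inN t k && inD n t k) ==> inF n t k) (iota 1 n) = condAX n (xsOf n t).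
Proof.
move=> hd n0; apply: eq_in_all => k; rewrite mem_iota => hk.
have hk' : 0 < k <= n by lia.
rewrite (inN_E hd hk') (inD_E hd n0 hk') (inF_E hd n0 hk').
by case: (rowX _ _); case: (colX _ _ _).
Qed.

Lemma condB_E n t : is_dyck n t -> 0 < n ->
  all (fun k => ~~ (inN t k && inD n t k)) (iota 1 n) = condBX n (xsOf n t).
Proof.
move=> hd n0; apply: eq_in_all => k; rewrite mem_iota => hk.
have hk' : 0 < k <= n by lia.
rewrite (inN_E hd hk') (inD_E hd n0 hk').
by case: (rowX _ _); case: (colX _ _ _).
Qed.

Lemma condBA n xs : condBX n xs -> condAX n xs.
Proof. by move/allP => h; apply/allP => k /h /orP [] ->; rewrite ?orbT. Qed.


End Part6.
Import Part6.

Theorem mainTheorem7 (n : nat) (hn : (1 <= n)%N) :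
  #|[pred t : (2 * n).-tuple bool | is_dyck n t &&
      all (fun k => (inN t k && inD n t k) ==> inF n t k) (iota 1 n)]|
    = #|[pred t : n.-tuple 'I_3 | is_motzkin t]|
  /\
  #|[pred t : (2 * n).-tuple bool | is_dyck n t &&
      all (fun k => ~~ (inN t k && inD n t k)) (iota 1 n)]|
    = #|[pred t : n.-tuple 'I_3 | is_riordan t]|.
Proof.
pose f := fun t : (2 * n).-tuple bool => [tuple nth ord0 (phiX n (xsOf n t)) i | i < n].
pose g := fun m : n.-tuple 'I_3 => [tuple nth false (wordX n (xsM m)) i | i < 2 * n].
have vf : forall t, val (f t) = phiX n (xsOf n t) by move=> t; rewrite val_mktuple ?size_phiX.
have vg : forall m, val (g m) = wordX n (xsM m) by move=> m; rewrite val_mktuple ?size_wordX.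
have hsx : forall t, size (xsOf n t) = n.+1 by move=> t; rewrite size_map size_iota.
have fwd : forall t : (2 * n).-tuple bool, is_dyck n t -> condAX n (xsOf n t) ->
   [/\ is_motzkin (f t), g (f t) = t & condBX n (xsOf n t) = is_riordan (f t)].
  move=> t hd hA; have hv := W_valid hd hn.
  have [h1 h2 h3] := M1 hv hA (hsx t) hn.
  have em : is_motzkin (f t) by rewrite vf.
  have er : condBX n (xsOf n t) = is_riordan (f t).
    by rewrite h3; exact: (congr1 is_riordan (esym (vf t))).
  split; [exact: em| |exact: er].
  apply: val_inj; rewrite vg.
  rewrite (congr1 xsM (vf t)) h2.
  exact: W_inv1.
have bwd : forall m : n.-tuple 'I_3, is_motzkin m ->
   [/\ is_dyck n (g m), condAX n (xsOf n (g m)), f (g m) = m &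
       condBX n (xsOf n (g m)) = is_riordan m].
  move=> m hm; have sm : size m = n by rewrite size_tuple.
  have n0 : 0 < size m by rewrite sm.
  have [h1 h2 h3] := M2 hm n0; rewrite sm in h1 h2 h3.
  have hxs : size (xsM m) = n.+1 by rewrite size_map size_iota sm.
  have [d1 d2] := W_inv2 h1 hxs hn.
  rewrite vg d2; split => //.
    by apply: val_inj; rewrite vf vg d2 h3.
  have [_ _ ->] := M1 h1 h2 hxs hn; by rewrite h3.
split.
  apply: (card_bij (f := f) (g := g)).
    move=> t /andP [hd hA]; rewrite (condA_E hd hn) in hA.
    by have [a1 a2 _] := fwd t hd hA; split => //; rewrite inE.
  move=> m hm; have [b1 b2 b3 _] := bwd m hm; split => //.
  by rewrite inE b1 /= (condA_E b1 hn).
apply: (card_bij (f := f) (g := g)).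
  move=> t /andP [hd hB]; rewrite (condB_E hd hn) in hB.
  have [a1 a2 a3] := fwd t hd (condBA hB); split => //.
  by rewrite inE -a3.
move=> m; rewrite inE => hr; have hm : is_motzkin m by case/andP: hr.
have [b1 b2 b3 b4] := bwd m hm; split => //.
by rewrite inE b1 /= (condB_E b1 hn) b4.
Qed.
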